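(* Let $X_1,\dots,X_n,T$ be independent random variables with common finite support $(l,r)$, where $X_1,\dots,X_n$ are i.i.d. with common CDF $F$ (distributed as $X$), and $T$ is uniformly distributed over $(l,r)$. Then $$R_{k,n}=\frac{1}{r-l}\sum_{j=k}^n\binom{n}{j}G_X(n-j,j),\qquad 0\le k\le n.$$
   Context: The reliability of the multi-component stress-strength system with strengths $X_1,\dots,X_n$ and stress $T$ (with CDF $F_T$), i.e. the probability that at least $k$ of the $X_i$ exceed $T$, is $R_{k,n}=\sum_{j=k}^n\binom{n}{j}\int_{-\infty}^{+\infty}[1-F(t)]^j[F(t)]^{n-j}\,dF_T(t)$, with $R_{0,n}=1$. The CIGF of $X$ is $G_X(\alpha,\beta)=\int_l^r [F(x)]^\alpha[1-F(x)]^\beta\,dx$ where $l=\inf\{x:F(x)>0\}$, $r=\sup\{x:F(x)<1\}$. *)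

(* Defs.v *)
From HB Require Import structures.
From mathcomp Require Import all_boot all_order all_algebra.
From mathcomp Require Import all_classical all_reals all_analysis.
Set Implicit Arguments. Unset Strict Implicit. Unset Printing Implicit Defensive.
Import Order.TTheory GRing.Theory Num.Theory.
Import numFieldNormedType.Exports.
Local Open Scope classical_set_scope.
Local Open Scope ring_scope.

Section defs.
Context {d : measure_display} {Omega : measurableType d} {R : realType}
  (P : probability Omega R).

Definition cdfR (X : {RV P >-> R}) (x : R) : R := fine (cdf X x).

Definition supp_l (X : {RV P >-> R}) : R := inf [set x | 0 < cdfR X x].
Definition supp_r (X : {RV P >-> R}) : R := sup [set x | cdfR X x < 1].

Definition CIGF (X : {RV P >-> R}) (alpha beta : nat) : \bar R :=
  (\int[lebesgue_measure]_(x in `](supp_l X), (supp_r X)[)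
     ((cdfR X x) ^+ alpha * (1 - cdfR X x) ^+ beta)%:E)%E.

(* Reliability of the k-out-of-n stress-strength system, strengths i.i.d.
   with CDF F = cdf of X, stress T:
   R_{k,n} = sum_{j=k}^n C(n,j) int [1-F(t)]^j [F(t)]^(n-j) dF_T(t),
   with R_{0,n} = 1. *)
Definition reliability (X T : {RV P >-> R}) (k n : nat) : \bar R :=
  if k == 0%N then 1%E else
  (\sum_(k <= j < n.+1)
     ('C(n, j))%:R%:E *
     \int[distribution P T]_t
        ((1 - cdfR X t) ^+ j * (cdfR X t) ^+ (n - j))%:E)%E.

End defs.

(* Main.v *)
Require Import Defs.
From HB Require Import structures.
From mathcomp Require Import all_boot all_order all_algebra.
From mathcomp Require Import all_classical all_reals all_analysis.
From mathcomp Require Import measurable_realfun.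
Import Order.TTheory GRing.Theory Num.Theory.
Import numFieldNormedType.Exports.
Local Open Scope classical_set_scope.
Local Open Scope ring_scope.

Lemma cdfR_nd (d : measure_display) (Omega : measurableType d)
  (R : realType) (P : probability Omega R) (X : {RV P >-> R}) :
  nondecreasing_fun (cdfR X).
Proof.
move=> x y xy; rewrite /cdfR fine_le ?fin_num_measure//; exact: cdf_nondecreasing.
Qed.

Lemma cdfR_mf (d : measure_display) (Omega : measurableType d)
  (R : realType) (P : probability Omega R) (X : {RV P >-> R}) (D : set R) :
  measurable D -> measurable_fun D (cdfR X).
Proof. move=> mD; apply: nondecreasing_measurable => //; exact: (@cdfR_nd _ _ _ _ X). Qed.

Lemma cdfR_01 (d : measure_display) (Omega : measurableType d)
  (R : realType) (P : probability Omega R) (X : {RV P >-> R}) x :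
  0 <= cdfR X x <= 1.
Proof.
rewrite /cdfR fine_ge0 ?cdf_ge0//=.
have := cdf_le1 X x; rewrite /cdf.
have : distribution P X `]-oo, x] \is a fin_num by apply: fin_num_measure.
by case: (distribution P X `]-oo, x]) => //= y _; rewrite lee_fin.
Qed.

Definition idR (R : realType) : measurableTypeR R -> R := fun x => x.
Lemma mid (R : realType) : measurable_fun setT (@idR R).
Proof. by move=> _ A mA; rewrite setTI. Qed.
Definition lebR (R : realType) : set R -> \bar R :=
  pushforward (@lebesgue_measure R) (@idR R).
Lemma lebR0 (R : realType) : lebR R set0 = 0%E.
Proof. by rewrite /lebR /pushforward preimage_set0 measure0. Qed.
Lemma lebR_ge0 (R : realType) (A : set R) : (0 <= lebR R A)%E.
Proof. rewrite /lebR /pushforward; exact: measure_ge0. Qed.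
Lemma lebR_ssa (R : realType) : semi_sigma_additive (lebR R).
Proof.
move=> F mF tF mUF; rewrite /lebR /pushforward preimage_bigcup.
apply: measure_semi_sigma_additive.
- by move=> n; rewrite -[X in measurable X]setTI; exact: mid.
- apply/trivIsetP => /= i j _ _ ij; rewrite -preimage_setI.
  by move/trivIsetP : tF => /(_ _ _ _ _ ij) ->//; rewrite preimage_set0.
- by rewrite -preimage_bigcup -[X in measurable X]setTI; exact: mid.
Qed.
HB.instance Definition _ (R : realType) :=
  isMeasure.Build _ R R (lebR R) (lebR0 R) (@lebR_ge0 R) (@lebR_ssa R).

Lemma unif_int (d : measure_display) (Omega : measurableType d)
  (R : realType) (P : probability Omega R) (T : {RV P >-> R}) (l r : R) (g : R -> R) :
  l < r -> measurable_fun setT g -> (forall x, 0 <= g x) ->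
  (forall A : set R, measurable A ->
     distribution P T A =
       (lebesgue_measure (A `&` `]l, r[) * ((r - l)^-1)%:E)%E) ->
  (\int[distribution P T]_t (g t)%:E =
    ((r - l)^-1)%:E * \int[lebesgue_measure]_(x in `]l, r[) (g x)%:E)%E.
Proof.
move=> lr mg g0 HT.
have c0 : 0 <= (r - l)^-1 by rewrite invr_ge0 subr_ge0 ltW.
pose k : {nonneg R} := NngNum c0.
have mD : measurable (`]l, r[ : set R) by [].
have mgE : measurable_fun setT (fun x => (g x)%:E) by exact/measurable_EFinP.
have mC : measurable (~` (`]l, r[ : set R)) by exact: measurableC.
rewrite -(setUv `]l, r[) (ge0_integral_setU _ mD mC); last 3 first.
- by rewrite setUv.
- by move=> x _; rewrite lee_fin.
- by rewrite /disj_set setICr.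
rewrite (null_set_integral mC); last 2 first.
- exact: measurable_funS mgE.
- by have := HT _ mC; rewrite setICl measure0 mul0e.
have E : (\int[distribution P T]_(x in `]l, r[) (g x)%:E =
   \int[mscale k (lebR R)]_(x in `]l, r[) (g x)%:E)%E.
  apply: eq_measure_integral => A mA AD.
  by have := HT _ mA; rewrite (setIidl AD) muleC.
rewrite adde0 E ge0_integral_mscale//; last 2 first.
- exact: measurable_funS mgE.
- by move=> x _; rewrite lee_fin.
rewrite /lebR (ge0_integral_pushforward (mid R))//.
- exact: measurable_funS mgE.
- by move=> x _; rewrite lee_fin.
Qed.

Theorem proposition11 (d : measure_display) (Omega : measurableType d)
  (R : realType) (P : probability Omega R) (X T : {RV P >-> R}) (l r : R) :
  has_lbound [set x | 0 < cdfR X x] ->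
  has_ubound [set x | cdfR X x < 1] ->
  l = supp_l X -> r = supp_r X -> l < r ->
  (* T is uniformly distributed over (l, r) *)
  (forall A : set R, measurable A ->
     distribution P T A =
       (lebesgue_measure (A `&` `]l, r[) * ((r - l)^-1)%:E)%E) ->
  forall k n : nat, (k <= n)%N ->
  reliability X T k n =
    (((r - l)^-1)%:E *
      \sum_(k <= j < n.+1) ('C(n, j))%:R%:E * CIGF X (n - j) j)%E.
Proof.
move=> _ _ El Er lr HT k n kn.
have F01 := @cdfR_01 _ _ _ _ X.
have mF : measurable_fun setT (cdfR X) := @cdfR_mf _ _ _ _ X _ measurableT.
pose g j t := (1 - cdfR X t) ^+ j * cdfR X t ^+ (n - j).
have mg j : measurable_fun setT (g j).
  apply: measurable_funM; apply: measurable_funX => //.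
  exact: measurable_funB.
have g0 j t : 0 <= g j t.
  by case/andP: (F01 t) => a b; rewrite mulr_ge0 ?exprn_ge0 // subr_ge0.
have key j : (\int[distribution P T]_t (g j t)%:E =
    ((r - l)^-1)%:E * CIGF X (n - j) j)%E.
  rewrite (@unif_int _ _ _ _ _ _ _ _ lr (mg j) (g0 j) HT) /CIGF -El -Er; congr (_ * _)%E.
  by apply: eq_integral => t _; rewrite /g mulrC.
have CI0 j : (0 <= ('C(n, j))%:R%:E * CIGF X (n - j) j)%E.
  apply: mule_ge0; first by rewrite lee_fin ler0n.
  apply: integral_ge0 => t _; rewrite lee_fin.
  by case/andP: (F01 t) => a b; rewrite mulr_ge0 ?exprn_ge0 // subr_ge0.
rewrite /reliability; case: eqP => [k0|k0].
  rewrite k0 ge0_sume_distrr; last by move=> j _; exact: CI0.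
  transitivity (\sum_(0 <= j < n.+1)
     \int[distribution P T]_t (('C(n, j))%:R * g j t)%:E)%E; last first.
    apply: eq_bigr => j _.
    rewrite muleCA -key -ge0_integralZl_EFin //.
    - by move=> t _; rewrite lee_fin.
    - exact/measurable_EFinP.
  rewrite -ge0_integral_sum //; last 2 first.
  - by move=> j; apply/measurable_EFinP; apply: measurable_funM => //; exact: measurable_cst.
  - by move=> j t _; rewrite lee_fin mulr_ge0.
  have S t : \sum_(0 <= j < n.+1) ('C(n, j))%:R * g j t = 1.
    rewrite big_mkord; transitivity ((cdfR X t + (1 - cdfR X t)) ^+ n);
      last by rewrite addrC subrK expr1n.
    rewrite exprDn; apply: eq_bigr => i _.
    by rewrite /g mulr_natl mulrC.
  under eq_integral do rewrite sumEFin S.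
  rewrite integral_cst // mul1e; exact: (esym (probability_setT (distribution P T))).
transitivity (\sum_(k <= j < n.+1)
   (('C(n, j))%:R%:E * (((r - l)^-1)%:E * CIGF X (n - j) j)))%E.
  by apply: eq_bigr => j _; rewrite -key.
rewrite ge0_sume_distrr; last by move=> j _; exact: CI0.
by apply: eq_bigr => j _; rewrite muleCA.
Qed.
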